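(* Consider an instance of the Balancing with Conflicts and Friendship game with $n$ players, $m$ machines and parameters $\alpha>0$, $\beta,\gamma\ge0$. (i) If $\alpha\ge\gamma$, the instance is $(\Lambda,0)$-semi-smooth, where $$\Lambda=1+\frac{m-1}{n}+\frac\beta\alpha\cdot\frac{m-1}{m}+\frac\gamma\alpha\left(\frac{m-1}{m}-\frac{m-1}{n}\right).$$ Hence its price of total anarchy is at most $\Lambda$. (ii) The bound in (i) is tight. For every $m\ge1$ and every $\alpha\ge\gamma$ and $\beta$, take $n=m^2$ players partitioned into $m$ disjoint groups of $m$ players. Let $E^+$ join every two players in the same group and $E^-$ join every two players in different groups. Then the mixed profile in which each player independently chooses each machine with probability $\frac1m$ is a mixed Nash equilibrium whose expected social cost equals $\Lambda\, c(\vec s^* )$. (iii) If $\alpha<\gamma$, the instance is $$\left(1+\frac\beta\alpha\cdot\frac{m-1}{m}+\frac\gamma\alpha\cdot\frac{m-1}{m},\;0\right)\text{-semi-smooth.}$$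
   Context: An instance of the Balancing with Conflicts and Friendship game consists of: - players $N=\{1,\dots,n\}$; - machines $M=\{1,\dots,m\}$; - two disjoint sets $E^+$ (friendship edges) and $E^-$ (conflict edges) of unordered pairs of distinct players; - parameters $\alpha>0$, $\beta\ge0$, $\gamma\ge0$. A state is $\vec s\in M^n$, with $X_k(\vec s)=\{i:s_i=k\}$ and $x_k(\vec s)=|X_k(\vec s)|$. The cost of player $i$ with $s_i=k$ is $$c_i(\vec s)=\alpha x_k(\vec s)+\beta\cdot\#\{j\in X_k(\vec s):\{i,j\}\in E^-\}+\gamma\cdot\#\{j\notin X_k(\vec s):\{i,j\}\in E^+\}.$$ The social cost is $c(\vec s)=\sum_ic_i(\vec s)$, and $\vec s^*$ minimizes $c$. A cost-minimization game is $(\lambda,\mu)$-semi-smooth if there exist probability distributions $\sigma_i$ over each player's strategies such that for every state $\vec s$, $$\sum_i\mathbf E_{s_i'\sim\sigma_i}[c_i(s_i',\vec s_{-i})]\le\lambda c(\vec s^* )+\mu c(\vec s).$$ A coarse correlated equilibrium (CCE) is a distribution $\sigma$ over states with $\mathbf E_{\vec s\sim\sigma}[c_i(\vec s)]\le\mathbf E_{\vec s\sim\sigma}[c_i(s_i',\vec s_{-i})]$ for all $i$ and $s_i'$. A mixed Nash equilibrium is a CCE that is a product distribution. The price of total anarchy is $\sup_\sigma\mathbf E_{\vec s\sim\sigma}[c(\vec s)]/c(\vec s^* )$ over CCE $\sigma$. *)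

(* Defs.v *)
From HB Require Import structures.
From mathcomp Require Import all_boot all_order all_algebra.
Set Implicit Arguments. Unset Strict Implicit. Unset Printing Implicit Defensive.
Import Order.TTheory GRing.Theory Num.Theory.
Local Open Scope ring_scope.

(* players 'I_n, machines 'I_m; a state assigns a machine to each player *)
Notation state n m := {ffun 'I_n -> 'I_m}.

Definition load n m (s : state n m) (k : 'I_m) : nat := #|[set j | s j == k]|.

(* Friendship edges F (= E^+) and conflict edges C (= E^-) are given as
   symmetric irreflexive relations on players (unordered pairs of distinct
   players), disjoint from each other. *)
Definition valid_instance n (F C : rel 'I_n) : Prop :=
  [/\ symmetric F, irreflexive F, symmetric C, irreflexive C
    & forall i j, ~~ (F i j && C i j)].

Definition cost (R : realFieldType) n m (F C : rel 'I_n) (a b g : R)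
    (s : state n m) (i : 'I_n) : R :=
  a * (load s (s i))%:R
  + b * (#|[set j | (s j == s i) && C i j]|)%:R
  + g * (#|[set j | (s j != s i) && F i j]|)%:R.

Definition social_cost (R : realFieldType) n m (F C : rel 'I_n) (a b g : R)
    (s : state n m) : R :=
  \sum_(i < n) cost F C a b g s i.

Definition upd n m (s : state n m) (i : 'I_n) (k : 'I_m) : state n m :=
  [ffun j => if j == i then k else s j].

Definition is_optimal (R : realFieldType) n m (F C : rel 'I_n) (a b g : R)
    (sstar : state n m) : Prop :=
  forall s : state n m, social_cost F C a b g sstar <= social_cost F C a b g s.

Definition is_distr (R : realFieldType) (T : finType) (p : {ffun T -> R}) : Prop :=
  (forall t, 0 <= p t) /\ \sum_(t : T) p t = 1.

Definition semi_smooth (R : realFieldType) n m (F C : rel 'I_n) (a b g : R)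
    (lam mu : R) : Prop :=
  exists p : 'I_n -> {ffun 'I_m -> R},
    (forall i, is_distr (p i)) /\
    forall sstar : state n m, is_optimal F C a b g sstar ->
    forall s : state n m,
      \sum_(i < n) \sum_(k < m) p i k * cost F C a b g (upd s i k) i
        <= lam * social_cost F C a b g sstar + mu * social_cost F C a b g s.

Definition expect (R : realFieldType) n m (sig : {ffun state n m -> R})
    (f : state n m -> R) : R :=
  \sum_(s : state n m) sig s * f s.

Definition is_CCE (R : realFieldType) n m (F C : rel 'I_n) (a b g : R)
    (sig : {ffun state n m -> R}) : Prop :=
  is_distr sig /\
  forall (i : 'I_n) (k : 'I_m),
    expect sig (fun s => cost F C a b g s i)
      <= expect sig (fun s => cost F C a b g (upd s i k) i).

Definition product_distr (R : realFieldType) n m (p : 'I_n -> {ffun 'I_m -> R})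
    : {ffun state n m -> R} :=
  [ffun s : state n m => \prod_(i < n) p i (s i)].

Definition is_mixed_NE (R : realFieldType) n m (F C : rel 'I_n) (a b g : R)
    (sig : {ffun state n m -> R}) : Prop :=
  is_CCE F C a b g sig /\
  exists p : 'I_n -> {ffun 'I_m -> R},
    (forall i, is_distr (p i)) /\ sig = product_distr p.

Definition Lambda (R : realFieldType) (n m : nat) (a b g : R) : R :=
  1 + (m%:R - 1) / n%:R + b / a * ((m%:R - 1) / m%:R)
    + g / a * ((m%:R - 1) / m%:R - (m%:R - 1) / n%:R).

Definition Lambda' (R : realFieldType) (m : nat) (a b g : R) : R :=
  1 + b / a * ((m%:R - 1) / m%:R) + g / a * ((m%:R - 1) / m%:R).

(* Tight instance of (ii): n = m^2 players, group of player i is i %/ m *)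
Definition friend_groups (m : nat) : rel 'I_(m * m) :=
  fun i j => (i != j) && ((i : nat) %/ m == (j : nat) %/ m)%N.
Definition conflict_groups (m : nat) : rel 'I_(m * m) :=
  fun i j => ((i : nat) %/ m != (j : nat) %/ m)%N.

Definition uniform_profile (R : realFieldType) (n m : nat) : 'I_n -> {ffun 'I_m -> R} :=
  fun _ => [ffun _ => (m%:R)^-1].
Arguments friend_groups m : clear implicits.
Arguments conflict_groups m : clear implicits.
Arguments uniform_profile R n m : clear implicits.
Arguments Lambda R n m a b g : clear implicits.
Arguments Lambda' R m a b g : clear implicits.

(* Main.v *)
Require Import Defs.
From HB Require Import structures.
From mathcomp Require Import all_boot all_order all_algebra.
From mathcomp Require Import ring lra.
Import Order.TTheory GRing.Theory Num.Theory.
Local Open Scope ring_scope.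

Lemma key_ineq (R : realFieldType) (N M a b g S Ci Cc Fi Fc : R) :
  1 <= N -> 1 <= M -> 0 < a -> 0 <= b -> 0 <= g -> g <= a ->
  0 <= Ci -> 0 <= Fc -> Cc <= N * N - S -> Fi <= S - N -> N * N <= M * S ->
  M^-1 * (N * (M - 1) * a + N * N * a + b * (Ci + Cc) + g * (M - 1) * (Fi + Fc))
  <= (1 + (M - 1) / N + b / a * ((M - 1) / M) + g / a * ((M - 1) / M - (M - 1) / N))
     * (a * S + b * Ci + g * Fc).
Proof.
move=> N1 M1 a0 b0 g0 ga Ci0 Fc0 hC hF hS.
have N0 : N != 0 by apply/eqP => h; rewrite h in N1; lra.
have M0 : M != 0 by apply/eqP => h; rewrite h in M1; lra.
have a0' : a != 0 by apply/eqP => h; rewrite h in a0; lra.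
set u := (M - 1) / N. set v := (M - 1) / M.
set L := (1 + u + b / a * v + g / a * (v - u)).
have u0 : 0 <= u by rewrite /u divr_ge0 //; lra.
have v0 : 0 <= v by rewrite /v divr_ge0 //; lra.
have v1 : 1 - v = M^-1 by rewrite /v; field.
have Mi0 : 0 <= M^-1 by rewrite invr_ge0; lra.
have Mi1 : M^-1 <= 1 by rewrite invf_le1; lra.
have L1 : 0 <= L - 1.
  have -> : L - 1 = u * (1 - g / a) + b / a * v + g / a * v by rewrite /L; ring.
  have h1 : g / a <= 1 by rewrite ler_pdivrMr // mul1r.
  have h2 : 0 <= g / a by rewrite divr_ge0 //; lra.
  have h3 : 0 <= b / a by rewrite divr_ge0 //; lra.
  have : 0 <= u * (1 - g / a) by apply: mulr_ge0; lra.
  have : 0 <= b / a * v by apply: mulr_ge0.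
  have : 0 <= g / a * v by apply: mulr_ge0.
  lra.
have D0 : 0 <= S - N * N / M.
  rewrite subr_ge0 ler_pdivrMr; first by rewrite [S * M]mulrC. lra.
have E : L * (a * S + b * Ci + g * Fc) -
  M^-1 * (N * (M - 1) * a + N * N * a + b * (Ci + Cc) + g * (M - 1) * (Fi + Fc)) =
  (L - 1) * (b * Ci + g * Fc) + b * (1 - M^-1) * Ci + g * (1 - v) * Fc
  + b * M^-1 * (N * N - S - Cc) + b * M^-1 * (M * S - N * N) + g * v * (S - N - Fi)
  + (a * (1 + u) - g * u) * (S - N * N / M).
  by rewrite /L /u /v; field; rewrite ?N0 ?M0 ?a0'.
rewrite -subr_ge0 E.
have t1 : 0 <= (L - 1) * (b * Ci + g * Fc) by apply: mulr_ge0 => //; apply: addr_ge0; apply: mulr_ge0.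
have t2 : 0 <= b * (1 - M^-1) * Ci by apply: mulr_ge0 => //; apply: mulr_ge0 => //; lra.
have t3 : 0 <= g * (1 - v) * Fc by apply: mulr_ge0 => //; apply: mulr_ge0 => //; lra.
have t4 : 0 <= b * M^-1 * (N * N - S - Cc) by apply: mulr_ge0; [apply: mulr_ge0|lra].
have t5 : 0 <= b * M^-1 * (M * S - N * N) by apply: mulr_ge0; [apply: mulr_ge0|lra].
have t6 : 0 <= g * v * (S - N - Fi) by apply: mulr_ge0; [apply: mulr_ge0|lra].
have t7 : 0 <= (a * (1 + u) - g * u) * (S - N * N / M).
  apply: mulr_ge0 => //.
  have : g * u <= a * u by apply: ler_wpM2r.
  have : 0 <= a by lra.
  nra.
lra.
Qed.
Lemma card_sum (R : realFieldType) (T : finType) (P : pred T) :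
  (#|[set j | P j]|)%:R = \sum_j (P j)%:R :> R.
Proof.
rewrite -sum1_card big_mkcond /= natr_sum; apply: eq_bigr => j _.
by rewrite inE; case: (P j).
Qed.

Lemma sum_ind (R : realFieldType) m (k0 : 'I_m) (f : 'I_m -> R) :
  \sum_k (k0 == k)%:R * f k = f k0.
Proof.
rewrite (bigD1 k0) //= eqxx mul1r big1 ?addr0 // => k /negbTE.
by rewrite eq_sym => ->; rewrite mul0r.
Qed.

Lemma sum_const_ord (R : realFieldType) m (c : R) : \sum_(k < m) c = m%:R * c.
Proof. by rewrite sumr_const card_ord mulr_natl. Qed.

Lemma cost_sum (R : realFieldType) n m (F C : rel 'I_n) (a b g : R) s i :
  @cost R n m F C a b g s i = \sum_j (a * (s j == s i)%:R
     + b * ((s j == s i) && C i j)%:R + g * ((s j != s i) && F i j)%:R).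
Proof.
rewrite /cost /load !card_sum !big_split /= !mulr_sumr.
by [].
Qed.

Lemma dev_sum (R : realFieldType) n m (F C : rel 'I_n) (a b g : R) s i :
  irreflexive F -> irreflexive C ->
  \sum_(k < m) @cost R n m F C a b g (upd s i k) i =
  (m%:R - 1) * a + \sum_j (a + b * (C i j)%:R + g * (m%:R - 1) * (F i j)%:R).
Proof.
move=> iF iC.
rewrite (eq_bigr (fun k => \sum_j (a * ((upd s i k) j == k)%:R
     + b * (((upd s i k) j == k) && C i j)%:R + g * (((upd s i k) j != k) && F i j)%:R))); last first.
  by move=> k _; rewrite cost_sum /upd ffunE eqxx.
rewrite exchange_big /= (bigD1 i) //= [in RHS](bigD1 i) //= iF iC.
rewrite [X in X + _](eq_bigr (fun _ => a)); last first.
  by move=> k _; rewrite /upd ffunE eqxx /= ?eqxx ?mulr1 ?andbF ?mulr0 ?addr0.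
rewrite (sum_const_ord _ m a) !mulr0 !addr0 addrA; congr (_ + _); first ring.
apply: eq_bigr => j ji.
rewrite (eq_bigr (fun k => a * (s j == k)%:R + (b * (C i j)%:R) * (s j == k)%:R
    + (g * (F i j)%:R) * (1 - (s j == k)%:R))); last first.
  move=> k _; rewrite /upd ffunE (negbTE ji).
  by case: (s j == k); case: (C i j); case: (F i j); rewrite /= ?mulr0 ?mulr1 ?subrr ?subr0 ?mulr0 ?addr0 ?add0r ?mulr1.
rewrite !big_split /= -!mulr_sumr.
have h1 : \sum_(k < m) (s j == k)%:R = 1 :> R.
  by rewrite -[RHS](sum_ind _ _ (s j) (fun _ => 1 : R)); apply: eq_bigr => k _; rewrite mulr1.
rewrite h1 sumrB h1 (sum_const_ord _ m 1); ring.
Qed.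
Lemma sum_ind1 (R : realFieldType) m (k0 : 'I_m) : \sum_k (k0 == k)%:R = 1 :> R.
Proof. by rewrite -[RHS](sum_ind _ _ k0 (fun _ => 1 : R)); apply: eq_bigr => k _; rewrite mulr1. Qed.

Lemma cauchy (R : realFieldType) n m (s : state n m) :
  n%:R * n%:R <= m%:R * \sum_i \sum_j (s j == s i)%:R :> R.
Proof.
pose x k := \sum_j (s j == k)%:R : R.
have hx : \sum_k x k = n%:R.
  rewrite /x exchange_big /= (eq_bigr (fun _ => 1)); last by move=> j _; apply: sum_ind1.
  by rewrite sum_const_ord mulr1.
have hS : \sum_i \sum_j (s j == s i)%:R = \sum_k x k * x k :> R.
  transitivity (\sum_i \sum_k (s i == k)%:R * x k).
    by apply: eq_bigr => i _; rewrite sum_ind.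
  rewrite exchange_big /=; apply: eq_bigr => k _; rewrite -mulr_suml.
  by congr (_ * _); rewrite /x; apply: eq_bigr => j _.
rewrite hS.
have h0 : 0 <= \sum_k \sum_l (x k - x l) ^+ 2 by apply: sumr_ge0 => k _; apply: sumr_ge0 => l _; apply: sqr_ge0.
have e : \sum_k \sum_l (x k - x l) ^+ 2 = 2%:R * (m%:R * \sum_k x k * x k) - 2%:R * (\sum_k x k) * (\sum_k x k).
  transitivity (\sum_k \sum_l (x k * x k + x l * x l - 2%:R * x k * x l)).
    by apply: eq_bigr => k _; apply: eq_bigr => l _; ring.
  rewrite (eq_bigr (fun k => m%:R * (x k * x k) + \sum_l x l * x l - 2%:R * x k * \sum_l x l)); last first.
    by move=> k _; rewrite sumrB big_split /= sum_const_ord -mulr_sumr.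
  rewrite sumrB big_split /= -mulr_sumr sum_const_ord -mulr_suml -mulr_sumr; ring.
rewrite e hx in h0.
lra.
Qed.

Lemma key_ineq' (R : realFieldType) (N M a b g S Ci Cc Fi Fc : R) :
  1 <= N -> 1 <= M -> 0 < a -> 0 <= b -> 0 <= g -> a <= g ->
  0 <= Ci -> 0 <= Fc -> Cc <= N * N - S -> Fi <= S - N -> N * N <= M * S ->
  M^-1 * (N * (M - 1) * a + N * N * a + b * (Ci + Cc) + g * (M - 1) * (Fi + Fc))
  <= (1 + b / a * ((M - 1) / M) + g / a * ((M - 1) / M))
     * (a * S + b * Ci + g * Fc).
Proof.
move=> N1 M1 a0 b0 g0 ga Ci0 Fc0 hC hF hS.
have N0 : N != 0 by apply/eqP => h; rewrite h in N1; lra.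
have M0 : M != 0 by apply/eqP => h; rewrite h in M1; lra.
have a0' : a != 0 by apply/eqP => h; rewrite h in a0; lra.
set v := (M - 1) / M.
set L := (1 + b / a * v + g / a * v).
have v0 : 0 <= v by rewrite /v divr_ge0 //; lra.
have v1 : 1 - v = M^-1 by rewrite /v; field.
have Mi0 : 0 <= M^-1 by rewrite invr_ge0; lra.
have Mi1 : M^-1 <= 1 by rewrite invf_le1; lra.
have L1 : 0 <= L - 1.
  have -> : L - 1 = b / a * v + g / a * v by rewrite /L; ring.
  have h2 : 0 <= g / a by rewrite divr_ge0 //; lra.
  have h3 : 0 <= b / a by rewrite divr_ge0 //; lra.
  have : 0 <= b / a * v by apply: mulr_ge0.
  have : 0 <= g / a * v by apply: mulr_ge0.
  lra.
have D0 : 0 <= S - N * N / M.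
  rewrite subr_ge0 ler_pdivrMr; first by rewrite [S * M]mulrC. lra.
have E : L * (a * S + b * Ci + g * Fc) -
  M^-1 * (N * (M - 1) * a + N * N * a + b * (Ci + Cc) + g * (M - 1) * (Fi + Fc)) =
  (L - 1) * (b * Ci + g * Fc) + b * (1 - M^-1) * Ci + g * (1 - v) * Fc
  + b * M^-1 * (N * N - S - Cc) + b * M^-1 * (M * S - N * N) + g * v * (S - N - Fi)
  + a * (S - N * N / M) + (g - a) * v * N.
  by rewrite /L /v; field; rewrite ?N0 ?M0 ?a0'.
rewrite -subr_ge0 E.
have t1 : 0 <= (L - 1) * (b * Ci + g * Fc) by apply: mulr_ge0 => //; apply: addr_ge0; apply: mulr_ge0.
have t2 : 0 <= b * (1 - M^-1) * Ci by apply: mulr_ge0 => //; apply: mulr_ge0 => //; lra.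
have t3 : 0 <= g * (1 - v) * Fc by apply: mulr_ge0 => //; apply: mulr_ge0 => //; lra.
have t4 : 0 <= b * M^-1 * (N * N - S - Cc) by apply: mulr_ge0; [apply: mulr_ge0|lra].
have t5 : 0 <= b * M^-1 * (M * S - N * N) by apply: mulr_ge0; [apply: mulr_ge0|lra].
have t6 : 0 <= g * v * (S - N - Fi) by apply: mulr_ge0; [apply: mulr_ge0|lra].
have t7 : 0 <= a * (S - N * N / M) by apply: mulr_ge0 => //; lra.
have t8 : 0 <= (g - a) * v * N by apply: mulr_ge0; [apply: mulr_ge0 => //; lra | lra].
lra.
Qed.

Lemma dev_total (R : realFieldType) n m (F C : rel 'I_n) (a b g : R) s :
  irreflexive F -> irreflexive C ->
  \sum_i \sum_(k < m) m%:R^-1 * @cost R n m F C a b g (upd s i k) i =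
  m%:R^-1 * (n%:R * (m%:R - 1) * a + n%:R * n%:R * a
     + b * \sum_i \sum_j (C i j)%:R + g * (m%:R - 1) * \sum_i \sum_j (F i j)%:R).
Proof.
move=> iF iC.
rewrite (eq_bigr (fun i => m%:R^-1 * ((m%:R - 1) * a + \sum_j (a + b * (C i j)%:R + g * (m%:R - 1) * (F i j)%:R)))); last first.
  by move=> i _; rewrite -mulr_sumr dev_sum.
rewrite -mulr_sumr; congr (_ * _).
rewrite big_split /= sum_const_ord.
rewrite (eq_bigr (fun i => n%:R * a + b * \sum_j (C i j)%:R + g * (m%:R - 1) * \sum_j (F i j)%:R)); last first.
  by move=> i _; rewrite !big_split /= sum_const_ord -!mulr_sumr.
rewrite !big_split /= sum_const_ord -!mulr_sumr; ring.
Qed.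

Lemma decomp (R : realFieldType) n m (F C : rel 'I_n) (a b g : R) (sstar s : state n m) :
  irreflexive F -> irreflexive C ->
  exists S Ci Cc Fi Fc : R,
  \sum_i \sum_(k < m) m%:R^-1 * @cost R n m F C a b g (upd s i k) i =
      m%:R^-1 * (n%:R * (m%:R - 1) * a + n%:R * n%:R * a + b * (Ci + Cc) + g * (m%:R - 1) * (Fi + Fc)) /\
      social_cost F C a b g sstar = a * S + b * Ci + g * Fc /\
      0 <= Ci /\ 0 <= Fc /\ Cc <= n%:R * n%:R - S /\ Fi <= S - n%:R /\ n%:R * n%:R <= m%:R * S.
Proof.
move=> iF iC.
set ind := fun (P : 'I_n -> 'I_n -> bool) => \sum_i \sum_j (P i j)%:R : R.
exists (ind (fun i j => sstar j == sstar i)), (ind (fun i j => (sstar j == sstar i) && C i j)),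
  (ind (fun i j => (sstar j != sstar i) && C i j)), (ind (fun i j => (sstar j == sstar i) && F i j)),
  (ind (fun i j => (sstar j != sstar i) && F i j)).
have split2 : forall P : rel 'I_n, ind P = ind (fun i j => (sstar j == sstar i) && P i j)
     + ind (fun i j => (sstar j != sstar i) && P i j).
  move=> P; rewrite /ind -big_split; apply: eq_bigr => i _; rewrite -big_split; apply: eq_bigr => j _ /=.
  by case: (sstar j == sstar i); case: (P i j); rewrite /= ?add0r ?addr0.
split.
  by rewrite dev_total // -!split2.
split.
  rewrite /social_cost /ind !mulr_sumr -!big_split; apply: eq_bigr => i _.
  by rewrite cost_sum !mulr_sumr -!big_split.
split.
  by apply: sumr_ge0 => i _; apply: sumr_ge0 => j _; rewrite ler0n.
split.
  by apply: sumr_ge0 => i _; apply: sumr_ge0 => j _; rewrite ler0n.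
split.
  have -> : n%:R * n%:R = ind (fun _ _ => true).
    by rewrite /ind !sum_const_ord /=; ring.
  rewrite -subr_ge0 /ind -!sumrB; apply: sumr_ge0 => i _; rewrite -!sumrB; apply: sumr_ge0 => j _.
  by case: (sstar j == sstar i); case: (C i j); rewrite /=; lra.
split; last by rewrite /ind; apply: cauchy.
  have -> : n%:R = ind (fun i j => i == j).
    by rewrite /ind (eq_bigr (fun _ => 1)) ?sum_const_ord ?mulr1 // => i _; apply: sum_ind1.
  rewrite -subr_ge0 /ind -!sumrB; apply: sumr_ge0 => i _; rewrite -!sumrB; apply: sumr_ge0 => j _.
  case: (eqVneq i j) => [->|_]; first by rewrite iF andbF eqxx /=; lra.
  by case: (sstar j == sstar i); case: (F i j); rewrite /=; lra.
Qed.

Lemma cce_bound (R : realFieldType) n m (F C : rel 'I_n) (a b g lam : R)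
   (sig : {ffun state n m -> R}) (sstar : state n m) :
  @semi_smooth R n m F C a b g lam 0 -> is_CCE F C a b g sig -> is_optimal F C a b g sstar ->
  expect sig (social_cost F C a b g) <= lam * social_cost F C a b g sstar.
Proof.
move=> [p [hp hs]] [[sig0 sig1] hc] hopt.
have step1 : expect sig (social_cost F C a b g) =
   \sum_i expect sig (fun s => cost F C a b g s i).
  rewrite /expect /social_cost (eq_bigr (fun s => \sum_i sig s * cost F C a b g s i)).
    by rewrite exchange_big.
  by move=> s _; rewrite mulr_sumr.
have step2 : forall i, expect sig (fun s => cost F C a b g s i) <=
   \sum_k p i k * expect sig (fun s => cost F C a b g (upd s i k) i).
  move=> i; have [p0 p1] := hp i.
  apply: (@le_trans _ _ (\sum_k p i k * expect sig (fun s => cost F C a b g s i))).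
    by rewrite -mulr_suml p1 mul1r.
  by apply: ler_sum => k _; apply: ler_wpM2l => //; apply: hc.
rewrite step1.
apply: (le_trans (ler_sum _ (fun i _ => step2 i))).
have step3 : \sum_i \sum_k p i k * expect sig (fun s => cost F C a b g (upd s i k) i)
   = \sum_s sig s * (\sum_i \sum_k p i k * cost F C a b g (upd s i k) i).
  rewrite /expect.
  transitivity (\sum_i \sum_k \sum_s sig s * (p i k * cost F C a b g (upd s i k) i)).
    apply: eq_bigr => i _; apply: eq_bigr => k _; rewrite mulr_sumr; apply: eq_bigr => s _.
    by rewrite mulrCA.
  transitivity (\sum_i \sum_s \sum_k sig s * (p i k * cost F C a b g (upd s i k) i)).
    by apply: eq_bigr => i _; rewrite exchange_big.
  rewrite exchange_big /=; apply: eq_bigr => s _; rewrite mulr_sumr; apply: eq_bigr => i _.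
  by rewrite mulr_sumr.
rewrite step3.
apply: (@le_trans _ _ (\sum_s sig s * (lam * social_cost F C a b g sstar))).
  apply: ler_sum => s _; apply: ler_wpM2l => //.
  by have := hs sstar hopt s; rewrite mul0r addr0.
by rewrite -mulr_suml sig1 mul1r.
Qed.

Lemma unif_distr (R : realFieldType) n m i : (0 < m)%N -> is_distr (uniform_profile R n m i).
Proof.
move=> m0; split => [k|]; first by rewrite ffunE invr_ge0 ler0n.
rewrite (eq_bigr (fun _ => m%:R^-1)) ?sum_const_ord ?mulfV //; first by rewrite pnatr_eq0 -lt0n.
by move=> k _; rewrite ffunE.
Qed.

Lemma part13 (R : realFieldType) (n m : nat) (F C : rel 'I_n) (a b g : R) :
     (0 < n)%N -> (0 < m)%N -> valid_instance F C ->
     0 < a -> 0 <= b -> 0 <= g ->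
     (g <= a ->
        @semi_smooth R n m F C a b g (Lambda R n m a b g) 0 /\
        forall (sig : {ffun state n m -> R}) (sstar : state n m),
          is_CCE F C a b g sig -> is_optimal F C a b g sstar ->
          expect sig (social_cost F C a b g)
            <= Lambda R n m a b g * social_cost F C a b g sstar)
     /\
     (a < g ->
        @semi_smooth R n m F C a b g (Lambda' R m a b g) 0).
Proof.
move=> n0 m0 [_ iF _ iC _] a0 b0 g0.
have N1 : 1 <= n%:R :> R by rewrite ler1n.
have M1 : 1 <= m%:R :> R by rewrite ler1n.
have gen : forall lam : R, (forall sstar s : state n m,
   \sum_i \sum_(k < m) m%:R^-1 * @cost R n m F C a b g (upd s i k) i <= lam * social_cost F C a b g sstar) ->
   @semi_smooth R n m F C a b g lam 0.
  move=> lam H; exists (uniform_profile R n m); split; first by move=> i; apply: unif_distr.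
  move=> sstar _ s; rewrite mul0r addr0.
  rewrite (eq_bigr (fun i => \sum_(k < m) m%:R^-1 * @cost R n m F C a b g (upd s i k) i)); first exact: H.
  by move=> i _; apply: eq_bigr => k _; rewrite ffunE.
split.
  move=> ga.
  have sm : @semi_smooth R n m F C a b g (Lambda R n m a b g) 0.
    apply: gen => sstar s.
    have [S [Ci [Cc [Fi [Fc [h1 [h2 [h3 [h4 [h5 [h6 h7]]]]]]]]]]] := decomp _ _ _ F C a b g sstar s iF iC.
    rewrite h1 h2; exact: key_ineq.
  split => // sig sstar hc ho; exact: cce_bound sm hc ho.
move=> ag; apply: gen => sstar s.
have [S [Ci [Cc [Fi [Fc [h1 [h2 [h3 [h4 [h5 [h6 h7]]]]]]]]]]] := decomp _ _ _ F C a b g sstar s iF iC.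
rewrite h1 h2; apply: key_ineq' => //; exact: ltW.
Qed.

Definition sw m (k k' x : 'I_m) : 'I_m := if x == k then k' else if x == k' then k else x.
Arguments sw {m}.

Lemma swK m (k k' : 'I_m) : involutive (sw k k').
Proof.
move=> x; rewrite /sw.
case: (eqVneq x k) => [xk|xk]; first by rewrite xk eqxx; case: (eqVneq k' k) => [->|_]; rewrite ?eqxx.
case: (eqVneq x k') => [xk'|xk']; first by rewrite xk' eqxx.
by rewrite (negbTE xk) (negbTE xk').
Qed.

Lemma sw_eq m (k k' x : 'I_m) : (sw k k' x == k') = (x == k).
Proof.
rewrite /sw; case: (eqVneq x k) => [_|xk] /=; first by rewrite eqxx.
case: (eqVneq x k') => [xk'|xk'] //=.
- by rewrite -xk' eq_sym (negbTE xk).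
- by rewrite (negbTE xk').
Qed.

Lemma upd_same n m (s : state n m) i : upd s i (s i) = s.
Proof. by apply/ffunP => j; rewrite ffunE; case: (eqVneq j i) => [->|]. Qed.

Lemma upd_upd n m (s : state n m) i k k' : upd (upd s i k') i k = upd s i k.
Proof. by apply/ffunP => j; rewrite !ffunE; case: (j == i). Qed.

Lemma upd_i n m (s : state n m) i k : upd s i k i = k.
Proof. by rewrite ffunE eqxx. Qed.

Lemma sum_fix (R : realFieldType) n m (h : state n m -> R) i (k : 'I_m) :
  (0 < m)%N -> (forall s k', h (upd s i k') = h s) ->
  \sum_(s : state n m) (s i == k)%:R * h s = m%:R^-1 * \sum_(s : state n m) h s.
Proof.
move=> m0 hh.
have eqk : forall k k' : 'I_m, \sum_(s : state n m) (s i == k)%:R * h s = \sum_(s : state n m) (s i == k')%:R * h s :> R.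
  move=> k1 k2.
  pose phi (s : state n m) := upd s i (sw k1 k2 (s i)).
  have phiK : involutive phi.
    move=> s; rewrite /phi upd_upd upd_i swK; exact: upd_same.
  rewrite [RHS](reindex_inj (inv_inj phiK)) /=; apply: eq_bigr => s _.
  by rewrite /phi upd_i sw_eq hh.
have : \sum_(s : state n m) h s = m%:R * \sum_(s : state n m) (s i == k)%:R * h s.
  transitivity (\sum_(s : state n m) \sum_k' (s i == k')%:R * h s).
    by apply: eq_bigr => s _; rewrite -mulr_suml sum_ind1 mul1r.
  rewrite exchange_big /= (eq_bigr (fun _ => \sum_(s : state n m) (s i == k)%:R * h s)); last by move=> k' _; rewrite (eqk k' k).
  by rewrite sum_const_ord.
move=> ->; rewrite mulrA mulVf ?mul1r //; by rewrite pnatr_eq0 -lt0n.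
Qed.

Lemma sum_avg (R : realFieldType) n m (f : state n m -> R) i :
  (0 < m)%N -> \sum_(s : state n m) f s = m%:R^-1 * \sum_(s : state n m) \sum_(k < m) f (upd s i k).
Proof.
move=> m0.
transitivity (\sum_(s : state n m) \sum_(k < m) (s i == k)%:R * f (upd s i k)).
  apply: eq_bigr => s _; rewrite (bigD1 (s i)) //= eqxx mul1r upd_same big1 ?addr0 //.
  by move=> k /negbTE; rewrite eq_sym => ->; rewrite mul0r.
rewrite exchange_big /= [X in _ = _ * X]exchange_big /= mulr_sumr.
apply: eq_bigr => k _; apply: sum_fix => // s k'; by rewrite upd_upd.
Qed.

Lemma count_nat m q N : (0 < m)%N ->
  (\sum_(0 <= j < N * m) ((j %/ m)%N == q) = if (q < N)%N then m else 0)%N.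
Proof.
move=> m0; elim: N => [|N IH]; first by rewrite mul0n big_geq.
rewrite mulSnr (big_cat_nat (leq0n (N * m)) (leq_addr m (N * m))) IH /=.
rewrite -{1}[(N * m)%N]add0n big_addn addKn.
rewrite (eq_big_nat _ _ (F2 := fun _ => ((N == q) : nat))); last first.
  by move=> r /andP [_ hr]; rewrite addnC divnMDl // divn_small // addn0.
rewrite sum_nat_const_nat subn0 ltnS.
case: (ltngtP q N) => [h|h|h] /=; by rewrite ?muln0 ?muln1 ?addn0.
Qed.

Lemma count_grp (R : realFieldType) m q : (0 < m)%N -> (q < m)%N ->
  \sum_(j : 'I_(m * m)) ((j %/ m)%N == q)%:R = m%:R :> R.
Proof.
move=> m0 qm; rewrite -natr_sum; congr (_%:R).
by rewrite -(big_mkord xpredT (fun j => ((j %/ m)%N == q) : nat)) count_nat // qm.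
Qed.

Lemma S0_val (R : realFieldType) m : (0 < m)%N ->
  \sum_(i : 'I_(m * m)) \sum_(j : 'I_(m * m)) ((j %/ m)%N == (i %/ m)%N)%:R
   = m%:R * (m%:R * m%:R) :> R.
Proof.
move=> m0; rewrite (eq_bigr (fun _ => m%:R)); last first.
  by move=> i _; apply: count_grp => //; rewrite ltn_divLR.
by rewrite sum_const_ord natrM mulrC mulrA.
Qed.

Lemma sig_val (R : realFieldType) n m s :
  product_distr (uniform_profile R n m) s = (m%:R^-1) ^+ n.
Proof.
rewrite ffunE (eq_bigr (fun _ => m%:R^-1)) ?prodr_const ?card_ord // => i _.
by rewrite ffunE.
Qed.

Lemma sig_sum (R : realFieldType) n m : (0 < m)%N ->
  \sum_(s : state n m) (m%:R^-1)^+n = 1 :> R.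
Proof.
move=> m0; rewrite sumr_const card_ffun !card_ord -[_ *+ (m ^ n)%N]mulr_natl natrX exprVn mulfV //.
by rewrite expf_neq0 // pnatr_eq0 -lt0n.
Qed.

Lemma expect_unif (R : realFieldType) n m (f : state n m -> R) :
  expect (product_distr (uniform_profile R n m)) f = (m%:R^-1)^+n * \sum_s f s.
Proof. by rewrite /expect mulr_sumr; apply: eq_bigr => s _; rewrite sig_val. Qed.

Lemma G_indep (R : realFieldType) n m (F C : rel 'I_n) (a b g : R) i (k k' : 'I_m) :
  (0 < m)%N -> irreflexive F -> irreflexive C ->
  \sum_(s : state n m) cost F C a b g (upd s i k) i = \sum_(s : state n m) cost F C a b g (upd s i k') i.
Proof.
move=> m0 iF iC.
suff H : forall k, \sum_(s : state n m) cost F C a b g (upd s i k) i =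
  \sum_j (if j == i then (\sum_(s : state n m) 1) * a else
    (a + b * (C i j)%:R - g * (F i j)%:R) * (m%:R^-1 * \sum_(s : state n m) 1)
     + g * (F i j)%:R * \sum_(s : state n m) 1).
  by rewrite !H.
move=> k0.
rewrite (eq_bigr (fun s : state n m => \sum_j (a * ((upd s i k0) j == k0)%:R
     + b * (((upd s i k0) j == k0) && C i j)%:R + g * (((upd s i k0) j != k0) && F i j)%:R))); last first.
  by move=> s _; rewrite cost_sum upd_i.
rewrite exchange_big /=; apply: eq_bigr => j _.
case: (eqVneq j i) => [->|ji].
  rewrite (eq_bigr (fun _ => a)) ?mulr1 ?sumr_const ?mulr_natl //.
  by move=> s _; rewrite upd_i eqxx iC iF /= mulr1 !mulr0 !addr0.
rewrite (eq_bigr (fun s : state n m => (a + b * (C i j)%:R - g * (F i j)%:R) * (s j == k0)%:R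
     + g * (F i j)%:R * 1)); last first.
  move=> s _; rewrite /upd ffunE (negbTE ji).
  by case: (s j == k0); case: (C i j); case: (F i j); rewrite /=; ring.
rewrite big_split /= -!mulr_sumr; congr (_ * _ + _).
rewrite (eq_bigr (fun s : state n m => (s j == k0)%:R * 1)); last by move=> s _; rewrite mulr1.
by apply: sum_fix.
Qed.

Lemma cce_unif (R : realFieldType) n m (F C : rel 'I_n) (a b g : R) :
  (0 < m)%N -> irreflexive F -> irreflexive C ->
  is_CCE F C a b g (product_distr (uniform_profile R n m)).
Proof.
move=> m0 iF iC; split.
  split; first by move=> s; rewrite sig_val exprn_ge0 // invr_ge0 ler0n.
  by rewrite (eq_bigr (fun _ => (m%:R^-1)^+n)) ?sig_sum // => s _; rewrite sig_val.
move=> i k; rewrite !expect_unif; apply: ler_wpM2l; first by rewrite exprn_ge0 // invr_ge0 ler0n.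
rewrite (sum_avg _ _ _ (fun s => cost F C a b g s i) i m0) exchange_big /=.
rewrite (eq_bigr (fun _ => \sum_(s : state n m) cost F C a b g (upd s i k) i)); last first.
  by move=> k' _; apply: G_indep.
rewrite sum_const_ord mulrA mulVf ?mul1r //; by rewrite pnatr_eq0 -lt0n.
Qed.

Lemma exp_soc_unif (R : realFieldType) n m (F C : rel 'I_n) (a b g : R) :
  (0 < m)%N -> irreflexive F -> irreflexive C ->
  expect (product_distr (uniform_profile R n m)) (social_cost F C a b g) =
  m%:R^-1 * (n%:R * (m%:R - 1) * a + n%:R * n%:R * a
     + b * \sum_i \sum_j (C i j)%:R + g * (m%:R - 1) * \sum_i \sum_j (F i j)%:R).
Proof.
move=> m0 iF iC; rewrite expect_unif.
set D := (X in _ = X).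
have -> : \sum_(s : state n m) social_cost F C a b g s = \sum_(s : state n m) D.
  rewrite /social_cost exchange_big /=.
  rewrite (eq_bigr (fun i => m%:R^-1 * \sum_(s : state n m) \sum_(k < m) cost F C a b g (upd s i k) i)); last first.
    by move=> i _; apply: sum_avg.
  rewrite [RHS](eq_bigr (fun s : state n m => \sum_i \sum_(k < m) m%:R^-1 * cost F C a b g (upd s i k) i)); last first.
    by move=> s _; rewrite dev_total.
  rewrite [RHS]exchange_big /=; apply: eq_bigr => i _; rewrite mulr_sumr; apply: eq_bigr => s _.
  by rewrite mulr_sumr.
by rewrite mulr_sumr -mulr_suml sig_sum // mul1r.
Qed.

Lemma grp_lt m (m0 : (0 < m)%N) (i : 'I_(m * m)) : ((i %/ m) < m)%N.
Proof. by rewrite ltn_divLR. Qed.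
Arguments grp_lt {m}.

Definition s0 m (m0 : (0 < m)%N) : state (m * m) m :=
  [ffun i : 'I_(m * m) => Ordinal (grp_lt m0 i)].
Arguments s0 {m}.

Lemma part2 (R : realFieldType) (m : nat) (a b g : R) :
     (0 < m)%N -> 0 < a -> 0 <= b -> 0 <= g -> g <= a ->
     let F := friend_groups m in
     let C := conflict_groups m in
     let sig := product_distr (uniform_profile R (m * m)%N m) in
     is_mixed_NE F C a b g sig /\
     forall sstar : state (m * m)%N m, is_optimal F C a b g sstar ->
       expect sig (social_cost F C a b g)
         = Lambda R (m * m)%N m a b g * social_cost F C a b g sstar.
Proof.
move=> m0 a0 b0 g0 ga F C sig.
have iF : irreflexive F by move=> i; rewrite /F /friend_groups eqxx.
have iC : irreflexive C by move=> i; rewrite /C /conflict_groups eqxx.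
split.
  split; first exact: cce_unif.
  exists (uniform_profile R (m * m) m); split => // i; exact: unif_distr.
move=> sstar hopt.
rewrite exp_soc_unif //.
set S0 := \sum_(i : 'I_(m * m)) \sum_(j : 'I_(m * m)) ((j %/ m)%N == (i %/ m)%N)%:R : R.
have hS0 : S0 = m%:R * (m%:R * m%:R) by apply: S0_val.
have hC : \sum_i \sum_j (C i j)%:R = (m * m)%:R * (m * m)%:R - S0 :> R.
  rewrite /S0 (eq_bigr (fun i : 'I_(m * m) => (m * m)%:R - \sum_(j : 'I_(m * m)) ((j %/ m)%N == (i %/ m)%N)%:R)).
    by rewrite sumrB sum_const_ord.
  move=> i _; rewrite -[X in X - _]mulr1 -sum_const_ord -sumrB; apply: eq_bigr => j _.
  by rewrite /C /conflict_groups eq_sym; case: eqP => _ /=; rewrite ?subrr ?subr0.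
have hF : \sum_i \sum_j (F i j)%:R = S0 - (m * m)%:R :> R.
  rewrite /S0 (eq_bigr (fun i : 'I_(m * m) => \sum_(j : 'I_(m * m)) ((j %/ m)%N == (i %/ m)%N)%:R - 1)).
    by rewrite sumrB sum_const_ord mulr1.
  move=> i _.
  have -> : \sum_(j : 'I_(m * m)) ((j %/ m)%N == (i %/ m)%N)%:R - 1 =
     \sum_(j : 'I_(m * m)) (((j %/ m)%N == (i %/ m)%N)%:R - (i == j)%:R) :> R.
    by rewrite sumrB sum_ind1.
  apply: eq_bigr => j _.
  rewrite /F /friend_groups; case: (eqVneq i j) => [->|ij] /=; first by rewrite eqxx subrr.
  by rewrite eq_sym subr0.
have copt : social_cost F C a b g sstar = a * (m%:R * (m%:R * m%:R)).
  have c0 : social_cost F C a b g (s0 m0) = a * S0.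
    rewrite /social_cost /S0 mulr_sumr; apply: eq_bigr => i _.
    rewrite cost_sum mulr_sumr; apply: eq_bigr => j _.
    have -> : (s0 m0 j == s0 m0 i) = ((j %/ m)%N == (i %/ m)%N) by rewrite !ffunE.
    rewrite /C /F /conflict_groups /friend_groups eq_sym.
    by case: ((i %/ m)%N == (j %/ m)%N); rewrite /= ?andbF !mulr0 !addr0.
  apply/eqP; rewrite eq_le; apply/andP; split.
    by rewrite -hS0 -c0; exact: hopt.
  have [S [Ci [Cc [Fi [Fc [_ [h2 [h3 [h4 [_ [_ h7]]]]]]]]]]] :=
    decomp _ _ _ F C a b g sstar sstar iF iC.
  rewrite h2.
  have hS : m%:R * (m%:R * m%:R) <= S :> R.
    have hm : (0 : R) < m%:R by rewrite ltr0n.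
    rewrite natrM in h7.
    rewrite -(ler_pM2l hm); nra.
  have : 0 <= b * Ci by apply: mulr_ge0.
  have : 0 <= g * Fc by apply: mulr_ge0.
  have : a * (m%:R * (m%:R * m%:R)) <= a * S by apply: ler_wpM2l => //; lra.
  lra.
rewrite copt hC hF hS0 /Lambda natrM.
have hm : (m%:R : R) != 0 by rewrite pnatr_eq0 -lt0n.
have ha : a != 0 by rewrite gt_eqF.
field.
by rewrite hm ha.
Qed.

Theorem theorem11 :
  (* parts (i) and (iii): an arbitrary instance *)
  (forall (R : realFieldType) (n m : nat) (F C : rel 'I_n) (a b g : R),
     (0 < n)%N -> (0 < m)%N -> valid_instance F C ->
     0 < a -> 0 <= b -> 0 <= g ->
     (g <= a ->
        @semi_smooth R n m F C a b g (Lambda R n m a b g) 0 /\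
        forall (sig : {ffun state n m -> R}) (sstar : state n m),
          is_CCE F C a b g sig -> is_optimal F C a b g sstar ->
          expect sig (social_cost F C a b g)
            <= Lambda R n m a b g * social_cost F C a b g sstar)
     /\
     (a < g ->
        @semi_smooth R n m F C a b g (Lambda' R m a b g) 0))
  /\
  (* part (ii): tightness *)
  (forall (R : realFieldType) (m : nat) (a b g : R),
     (0 < m)%N -> 0 < a -> 0 <= b -> 0 <= g -> g <= a ->
     let F := friend_groups m in
     let C := conflict_groups m in
     let sig := product_distr (uniform_profile R (m * m)%N m) in
     is_mixed_NE F C a b g sig /\
     forall sstar : state (m * m)%N m, is_optimal F C a b g sstar ->
       expect sig (social_cost F C a b g)
         = Lambda R (m * m)%N m a b g * social_cost F C a b g sstar).
Proof.
split; [exact: part13 | exact: part2].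
Qed.
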